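(* Let $\mathcal{A}$ be an integral domain with field of fractions $\mathcal{F}$, let $\mathcal{Z}\subsetneq\mathcal{A}$ be a prime ideal, and let $\mathcal{P}=\{n/d\mid n\in\mathcal{A},\ d\in\mathcal{A}\setminus\mathcal{Z}\}$. Let $a,b,a',b'\in\mathcal{A}$ with $a'\neq0$, suppose $ab=a'b'$, and suppose $p=a/a'$ belongs to $\mathcal{P}$. If the pair $(a,b)$ is coprime over $\mathcal{A}$ (i.e. $xa+yb=1$ for some $x,y\in\mathcal{A}$), then the single-input single-output plant $p$ is stabilizable (whether or not $p$ has a coprime factorization over $\mathcal{A}$).
   Context: $\mathcal{A}$ is the ring of stable causal transfer functions, $\mathcal{F}$ its field of fractions, and elements of $\mathcal{P}$ are the causal transfer functions. For a single-input single-output plant $p\in\mathcal{F}$ and controller $c\in\mathcal{F}$ with $1+pc\neq0$, the closed-loop matrix is $H(p,c)=\begin{pmatrix}(1+pc)^{-1} & -p(1+pc)^{-1}\\ c(1+pc)^{-1} & (1+pc)^{-1}\end{pmatrix}$; $p$ is stabilizable if there exists $c\in\mathcal{F}$ with $1+pc\neq0$ such that all entries of $H(p,c)$ lie in $\mathcal{A}$. A coprime factorization of $p$ is $p=n/d$ with $n,d\in\mathcal{A}$, $d\neq0$, and $xn+yd=1$ for some $x,y\in\mathcal{A}$. *)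

(* Defs.v *)
From HB Require Import structures.
From mathcomp Require Import all_boot all_order all_algebra.
From mathcomp Require Import fraction ring_quotient.
Set Implicit Arguments. Unset Strict Implicit. Unset Printing Implicit Defensive.
Import GRing.Theory.
Local Open Scope ring_scope.

Notation "x %:F" := (@FracField.tofrac _ x).

Definition inA (R : idomainType) (x : {fraction R}) : Prop :=
  exists r : R, x = r%:F.

Definition inP (R : idomainType) (Z : {pred R}) (x : {fraction R}) : Prop :=
  exists n d : R, d \notin Z /\ x = n%:F / d%:F.

Definition Hcl (R : idomainType) (p c : {fraction R}) : 'M[{fraction R}]_2 :=
  \matrix_(i < 2, j < 2)
    if (i == 0) && (j == 0) then (1 + p * c)^-1
    else if (i == 0) then - p * (1 + p * c)^-1
    else if (j == 0) then c * (1 + p * c)^-1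
    else (1 + p * c)^-1.

Definition stabilizable (R : idomainType) (p : {fraction R}) : Prop :=
  exists c : {fraction R}, 1 + p * c != 0 /\ forall i j, inA (Hcl p c i j).

(* Main.v *)
Require Import Defs.
From HB Require Import structures.
From mathcomp Require Import all_boot all_order all_algebra.
From mathcomp Require Import fraction ring_quotient.
From mathcomp Require Import ring.
Import GRing.Theory.
Local Open Scope ring_scope.

Ltac fld := field; rewrite ?andbT //.
Lemma case0 (F : fieldType) (A A' X : F) : A' != 0 -> X * A = 1 ->
  [/\ 1 + A / A' * (1 - A' * X) != 0,
      (1 + A / A' * (1 - A' * X))^-1 = A' * X,
      - (A / A') * (1 + A / A' * (1 - A' * X))^-1 = -1 &
      (1 - A' * X) * (1 + A / A' * (1 - A' * X))^-1 = (1 - A' * X) * (A' * X)].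
Proof.
move=> nA' hX.
have nA : A != 0 by apply/eqP => h; move: hX; rewrite h mulr0 => /eqP; rewrite eq_sym oner_eq0.
have Fx : X = A^-1 by rewrite -[X]mulr1 -(mulfV nA) mulrA hX mul1r.
have e : 1 + A / A' * (1 - A' * A^-1) = A / A' by fld; rewrite nA nA'.
rewrite Fx e; split.
- by rewrite mulf_neq0 // invr_eq0.
- by fld; rewrite nA nA'.
- by fld; rewrite nA nA'.
- by fld; rewrite nA nA'.
Qed.
Lemma case1 (F : fieldType) (A A' B B' X Y : F) : A' != 0 -> Y * B != 0 ->
  X * A + Y * B = 1 -> A * B = A' * B' ->
  [/\ 1 + A / A' * (X * A' / (Y * B)) != 0,
      (1 + A / A' * (X * A' / (Y * B)))^-1 = Y * B,
      - (A / A') * (1 + A / A' * (X * A' / (Y * B)))^-1 = - (Y * B') &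
      (X * A' / (Y * B)) * (1 + A / A' * (X * A' / (Y * B)))^-1 = X * A'].
Proof.
move=> nA' nYB hxy hab.
have nY : Y != 0 by apply: contraNneq nYB => ->; rewrite mul0r.
have nB : B != 0 by apply: contraNneq nYB => ->; rewrite mulr0.
have e : 1 + A / A' * (X * A' / (Y * B)) = (Y * B)^-1.
  have -> : 1 + A / A' * (X * A' / (Y * B)) = (Y * B + X * A) / (Y * B) by fld; rewrite ?nA' ?nY ?nB.
  by rewrite addrC hxy mul1r.
rewrite e invrK; split => //.
- by rewrite invr_eq0.
- have -> : - (A / A') * (Y * B) = - (Y * (A * B)) / A' by fld; rewrite ?nA'.
  rewrite hab; by fld; rewrite ?nA'.
- by fld; rewrite ?nA' ?nY ?nB.
Qed.

Lemma stab_of (R : idomainType) (p c : {fraction R}) (e0 e1 e2 : R) :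
  1 + p * c != 0 ->
  (1 + p * c)^-1 = e0%:F -> - p * (1 + p * c)^-1 = e1%:F ->
  c * (1 + p * c)^-1 = e2%:F -> stabilizable p.
Proof.
move=> nz h0 h1 h2; exists c; split => // i j; rewrite /Hcl mxE.
case: i => [[|[|//]] Hi]; case: j => [[|[|//]] Hj] /=.
- by exists e0.
- by exists e1.
- by exists e2.
- by exists e0.
Qed.

Theorem proposition2 (R : idomainType) (Z : {pred R})
    (HZideal : idealr_closed Z) (HZprime : prime_idealr_closed Z)
    (a b a' b' : R) (Ha' : a' != 0) (Hab : a * b = a' * b')
    (HpP : inP Z (a%:F / a'%:F))
    (Hcop : exists x y : R, x * a + y * b = 1) :
  stabilizable (a%:F / a'%:F).
Proof.
have [x [y [Hxy Hy]]] : exists x y : R, x * a + y * b = 1 /\ (b != 0 -> y != 0).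
  case: Hcop => x [y Hxy]; have [y0|ny] := eqVneq y 0.
    exists (x - b), a; split; first by rewrite -Hxy y0 mul0r addr0 mulrBl [b * a]mulrC subrK.
    move=> _; apply/eqP => a0; move: Hxy; rewrite y0 a0 mulr0 mul0r addr0 => /eqP.
    by rewrite eq_sym oner_eq0.
  by exists x, y.
have FA' : a'%:F != 0 by rewrite tofrac_eq0.
have Fxy : x%:F * a%:F + y%:F * b%:F = 1 by rewrite -!rmorphM -rmorphD Hxy rmorph1.
have Fab : a%:F * b%:F = a'%:F * b'%:F by rewrite -!rmorphM Hab.
have [b0|nb] := eqVneq b 0.
  have Fxa : x%:F * a%:F = 1 by move: Fxy; rewrite b0 rmorph0 mulr0 addr0.
  have [h1 h2 h3 h4] := @case0 _ _ _ _ FA' Fxa.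
  apply: (@stab_of _ _ _ (a' * x) (-1) ((1 - a' * x) * (a' * x)) h1).
  - by rewrite h2 rmorphM.
  - by rewrite h3 rmorphN rmorph1.
  - by rewrite h4 !rmorphM rmorphB rmorph1 rmorphM.
have FY : y%:F * b%:F != 0 by rewrite mulf_neq0 // tofrac_eq0 ?Hy.
have [h1 h2 h3 h4] := @case1 _ _ _ _ _ _ _ FA' FY Fxy Fab.
apply: (@stab_of _ _ _ (y * b) (- (y * b')) (x * a') h1).
- by rewrite h2 rmorphM.
- by rewrite h3 rmorphN rmorphM.
- by rewrite h4 rmorphM.
Qed.
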